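(* Let $K\ge2$, $1<\theta<\frac32$, $T>0$, and let $\boldsymbol\xi=(\xi_1,\dots,\xi_K)$ be $C^1$ on $[T,\infty)$ satisfying $$\dot\xi_1=-t^{-1}\gamma_1\big(e^{-(\xi_2-\xi_1)}-1\big)+r_1(t),$$ $$\dot\xi_k=t^{-1}\Big(\gamma_{k-1}\big(e^{-(\xi_k-\xi_{k-1})}-1\big)-\gamma_k\big(e^{-(\xi_{k+1}-\xi_k)}-1\big)\Big)+r_k(t),\quad 2\le k\le K-1,$$ $$\dot\xi_K=t^{-1}\gamma_{K-1}\big(e^{-(\xi_K-\xi_{K-1})}-1\big)+r_K(t),$$ where $\gamma_k=\frac{k(K-k)}{2}$ and $|r_k(t)|\le Ct^{-\theta}$, and assume $\big|\sum_{k=1}^K\xi_k(t)\big|\le Ct^{-\theta+1}$ for all $t\ge T$. Then $\xi_k(t)=O(t^{-\theta+1})$ as $t\to\infty$ for every $k=1,\dots,K$. *)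

(* Defs.v *)
From Stdlib Require Import Reals Lra.
Open Scope R_scope.

(* gamma_k = k (K - k) / 2  (used for 1 <= k <= K-1, so nat subtraction is exact) *)
Definition gam (K k : nat) : R := INR (k * (K - k)) / 2.

(* Right-hand side of the ODE system (without the remainder r_k), for
   indices 1 <= k <= K.  xi : nat -> R -> R, components indexed 1..K. *)
Definition ode_rhs (K : nat) (xi : nat -> R -> R) (k : nat) (t : R) : R :=
  if Nat.eqb k 1 then
    - / t * (gam K 1 * (exp (- (xi 2%nat t - xi 1%nat t)) - 1))
  else if Nat.eqb k K then
    / t * (gam K (K - 1) * (exp (- (xi K t - xi (K - 1)%nat t)) - 1))
  else
    / t * (gam K (k - 1) * (exp (- (xi k t - xi (k - 1)%nat t)) - 1)
           - gam K k * (exp (- (xi (S k) t - xi k t)) - 1)).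

Definition xsum (K : nat) (xi : nat -> R -> R) (t : R) : R :=
  sum_f_R0 (fun j => xi (S j) t) (K - 1).

(* Main.v *)
Require Import Defs.
From Stdlib Require Import Reals Lra Lia Psatz FunctionalExtensionality.
From Coquelicot Require Import Coquelicot.
Open Scope R_scope.

Lemma mono_deriv (f f' : R -> R) a b : a <= b ->
  (forall c, a <= c <= b -> derivable_pt_lim f c (f' c)) ->
  (forall c, a <= c <= b -> 0 <= f' c) -> f a <= f b.
Proof.
  intros Hab Hd Hp. destruct (Rle_lt_or_eq_dec _ _ Hab) as [Hlt|<-]; [|lra].
  destruct (MVT_cor2 f f' a b Hlt Hd) as [c [Hc Hc2]].
  assert (0 <= f' c) by (apply Hp; lra). nra.
Qed.

Definition vf (u : R) := exp (- u) + u - 1.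
Definition hf (u : R) := (exp (- u) - 1) ^ 2.

Lemma vf_ge0 u : 0 <= vf u.
Proof. unfold vf. pose proof (exp_ineq1_le (- u)). lra. Qed.

Lemma vf_ge_lin u : u - 1 <= vf u.
Proof. unfold vf. pose proof (exp_pos (- u)). lra. Qed.

Lemma h_ge_2v_neg u : u <= 0 -> 2 * vf u <= hf u.
Proof.
  intros Hu. unfold vf, hf.
  set (g := fun s => (exp s - 1) ^ 2 - 2 * (exp s - s - 1)).
  assert (g 0 <= g (- u)).
  { apply (mono_deriv g (fun s => 2 * (exp s - 1) ^ 2)); [lra| |].
    - intros c _. apply is_derive_Reals. unfold g. auto_derive; [exact I|]; field.
    - intros c _. pose proof (pow2_ge_0 (exp c - 1)); lra. }
  unfold g in H. rewrite exp_0 in H. lra.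
Qed.

Lemma vf_le_sq u : 0 <= u -> vf u <= u ^ 2 / 2.
Proof.
  intros Hu. unfold vf.
  set (g := fun s => s ^ 2 / 2 - (exp (- s) + s - 1)).
  assert (g 0 <= g u).
  { apply (mono_deriv g (fun s => s + exp (- s) - 1)); [lra| |].
    - intros c _. apply is_derive_Reals. unfold g. auto_derive; [exact I|]; field.
    - intros c _. pose proof (exp_ineq1_le (- c)). lra. }
  unfold g in H. rewrite Ropp_0, exp_0 in H. lra.
Qed.

Lemma exp_m2 x : exp (- (2 * x)) = exp (- x) ^ 2.
Proof. replace (- (2 * x)) with (- x + - x) by ring. rewrite exp_plus. ring. Qed.

Lemma h_ge_pos u U : 0 <= u <= U -> u ^ 2 * exp (- (2 * U)) <= hf u.
Proof.
  intros [H0 H1]. unfold hf.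
  assert (Hk : u * exp (- u) <= 1 - exp (- u)).
  { pose proof (exp_ineq1_le u). pose proof (exp_pos (- u)).
    assert (exp u * exp (- u) = 1) by (rewrite <- exp_plus; replace (u + - u) with 0 by ring; apply exp_0).
    nra. }
  assert (Hm : exp (- U) <= exp (- u)).
  { destruct (Req_dec u U) as [->|]; [lra|]. left. apply exp_increasing. lra. }
  pose proof (exp_pos (- U)). rewrite exp_m2.
  assert (0 <= u * exp (- U) <= 1 - exp (- u)) by nra.
  nra.
Qed.

Lemma PL u U : 0 <= U -> u <= U -> 2 * exp (- (2 * U)) * vf u <= hf u.
Proof.
  intros HU Hu. pose proof (vf_ge0 u).
  assert (exp (- (2 * U)) <= 1).
  { rewrite <- exp_0. destruct (Req_dec U 0) as [->|]. right; f_equal; ring.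
    left; apply exp_increasing; lra. }
  pose proof (exp_pos (- (2 * U))).
  destruct (Rle_lt_dec u 0).
  - pose proof (h_ge_2v_neg u r). nra.
  - pose proof (h_ge_pos u U ltac:(lra)). pose proof (vf_le_sq u ltac:(lra)). nra.
Qed.

Lemma vf_ge_sq u : u <= 1 / 2 -> u ^ 2 / 4 <= vf u.
Proof.
  intros Hu. destruct (Rle_lt_dec u 0).
  - set (g := fun s => exp s - 1 - s - s ^ 2 / 2).
    assert (g 0 <= g (- u)).
    { apply (mono_deriv g (fun s => exp s - 1 - s)); [lra| |].
      - intros c _. apply is_derive_Reals. unfold g. auto_derive; [exact I|]; field.
      - intros c _. pose proof (exp_ineq1_le c). lra. }
    unfold g in H. rewrite exp_0 in H. unfold vf. nra.
  - set (g := fun s => 1 + s * exp s - exp s - s ^ 2 / 2).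
    assert (g 0 <= g u).
    { apply (mono_deriv g (fun s => s * (exp s - 1))); [lra| |].
      - intros c _. apply is_derive_Reals. unfold g. auto_derive; [exact I|]; field.
      - intros c Hc. pose proof (exp_ineq1_le c). nra. }
    unfold g in H. rewrite exp_0 in H.
    assert (E : exp u * exp (- u) = 1) by (rewrite <- exp_plus; replace (u + - u) with 0 by ring; apply exp_0).
    pose proof (exp_ineq1_le (- u)). pose proof (exp_pos u). pose proof (exp_pos (-u)).
    assert (exp u <= 2) by nra.
    unfold vf. nra.
Qed.

Lemma vf_mono a b : 0 <= a <= b -> vf a <= vf b.
Proof.
  intros [H0 H1]. apply (mono_deriv vf (fun s => 1 - exp (- s))); [lra| |].
  - intros c _. apply is_derive_Reals. unfold vf. auto_derive; [exact I|]; field.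
  - intros c Hc. assert (exp (- c) <= 1).
    { rewrite <- exp_0. destruct (Req_dec c 0) as [->|]. right; f_equal; ring.
      left; apply exp_increasing; lra. } lra.
Qed.

Lemma abel (a f : nat -> R) n :
  sum_f_R0 (fun k => f (S k) * (a (S (S k)) - a (S k))) n
  + sum_f_R0 (fun k => a (S k) * (f (S k) - f k)) (S n)
  = a (S (S n)) * f (S (S n)) - a 1%nat * f 0%nat.
Proof.
  induction n.
  - simpl. ring.
  - rewrite tech5. rewrite (tech5 _ (S n)). 
    replace (sum_f_R0 (fun k => f (S k) * (a (S (S k)) - a (S k))) n +
      f (S (S n)) * (a (S (S (S n))) - a (S (S n))) +
      (sum_f_R0 (fun k => a (S k) * (f (S k) - f k)) (S n) +
      a (S (S (S n))) * (f (S (S (S n))) - f (S (S n)))))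
    with ((sum_f_R0 (fun k => f (S k) * (a (S (S k)) - a (S k))) n +
      sum_f_R0 (fun k => a (S k) * (f (S k) - f k)) (S n)) +
      f (S (S n)) * (a (S (S (S n))) - a (S (S n))) +
      a (S (S (S n))) * (f (S (S (S n))) - f (S (S n)))) by ring.
    rewrite IHn. ring.
Qed.

Lemma sum_shift0 (g : nat -> R) n :
  sum_f_R0 g (S n) = g 0%nat + sum_f_R0 (fun k => g (S k)) n.
Proof.
  induction n.
  - simpl. ring.
  - rewrite tech5, IHn, tech5. ring.
Qed.

Lemma sum_plus' (f g : nat -> R) n :
  sum_f_R0 (fun k => f k + g k) n = sum_f_R0 f n + sum_f_R0 g n.
Proof. induction n; simpl; [ring| rewrite IHn; ring]. Qed.

Lemma sum_eq' (f g : nat -> R) n :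
  (forall k, (k <= n)%nat -> f k = g k) -> sum_f_R0 f n = sum_f_R0 g n.
Proof. intros H. induction n; simpl. apply H; lia. rewrite IHn by (intros; apply H; lia). rewrite H by lia. ring. Qed.

Lemma sum_scal (c : R) (f : nat -> R) n :
  sum_f_R0 (fun k => c * f k) n = c * sum_f_R0 f n.
Proof. induction n; simpl; [ring| rewrite IHn; ring]. Qed.

Lemma sum_nonneg (f : nat -> R) n : (forall k, (k <= n)%nat -> 0 <= f k) -> 0 <= sum_f_R0 f n.
Proof. intros H. induction n; simpl. apply H; lia. pose proof (H (S n) (le_n _)). assert (0 <= sum_f_R0 f n) by (apply IHn; intros; apply H; lia). lra. Qed.

Lemma term_le_sum (f : nat -> R) n k : (forall j, (j <= n)%nat -> 0 <= f j) -> (k <= n)%nat -> f k <= sum_f_R0 f n.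
Proof.
  intros H Hk. induction n.
  - assert (k = 0%nat) by lia. subst. simpl. lra.
  - simpl. destruct (Nat.eq_dec k (S n)) as [->|Hne].
    + assert (0 <= sum_f_R0 f n) by (apply sum_nonneg; intros; apply H; lia). lra.
    + assert (f k <= sum_f_R0 f n) by (apply IHn; [intros; apply H; lia| lia]).
      pose proof (H (S n) (le_n _)). lra.
Qed.

Definition phi (N j : nat) : R := INR j * (INR N - INR j).

Lemma hardy_term (x y p q : R) : 0 < p -> 0 < q ->
  y ^ 2 * (1 - p / q) + x ^ 2 * (1 - q / p) <= (y - x) ^ 2.
Proof.
  intros Hp Hq.
  assert (E : (y - x) ^ 2 - (y ^ 2 * (1 - p / q) + x ^ 2 * (1 - q / p)) = (y * p - x * q) ^ 2 / (p * q)) by (field; lra).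
  assert (0 <= (y * p - x * q) ^ 2 / (p * q)).
  { apply Rmult_le_pos. apply pow2_ge_0. left. apply Rinv_0_lt_compat. nra. }
  lra.
Qed.

Lemma phi_pos n j : (1 <= j <= S n)%nat -> 0 < phi (S (S n)) j.
Proof.
  intros Hj. unfold phi. apply Rmult_lt_0_compat.
  - apply lt_0_INR. lia.
  - assert (INR j < INR (S (S n))) by (apply lt_INR; lia). lra.
Qed.

Lemma hardy n (f : nat -> R) : f 0%nat = 0 -> f (S (S n)) = 0 ->
  sum_f_R0 (fun k => 2 * f (S k) ^ 2 / phi (S (S n)) (S k)) n
  <= sum_f_R0 (fun j => (f (S j) - f j) ^ 2) (S n).
Proof.
  intros H0 HN.
  set (P := fun j => f (S j) ^ 2 * (1 - phi (S (S n)) j / phi (S (S n)) (S j))).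
  set (Q := fun j => f j ^ 2 * (1 - phi (S (S n)) (S j) / phi (S (S n)) j)).
  assert (Hle : sum_f_R0 (fun j => P j + Q j) (S n) <= sum_f_R0 (fun j => (f (S j) - f j) ^ 2) (S n)).
  { apply sum_Rle. intros j Hj. unfold P, Q.
    destruct j as [|j].
    - rewrite H0. replace (phi (S (S n)) 0) with 0 by (unfold phi; simpl; ring).
      replace (0 / phi (S (S n)) 1) with 0 by (unfold Rdiv; ring). lra.
    - destruct (Nat.eq_dec j n) as [->|Hne].
      + rewrite HN. replace (phi (S (S n)) (S (S n))) with 0 by (unfold phi; ring).
        replace (0 / phi (S (S n)) (S n)) with 0 by (unfold Rdiv; ring). lra.
      + apply hardy_term; apply phi_pos; lia. }
  assert (Esum : sum_f_R0 (fun j => P j + Q j) (S n) =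
     sum_f_R0 (fun k => 2 * f (S k) ^ 2 / phi (S (S n)) (S k)) n).
  { rewrite sum_plus'. rewrite tech5. rewrite sum_shift0.
    assert (P (S n) = 0) by (unfold P; rewrite HN; ring).
    assert (Q 0%nat = 0) by (unfold Q; rewrite H0; ring).
    rewrite H, H1. rewrite Rplus_0_r, Rplus_0_l. rewrite <- sum_plus'.
    apply sum_eq'. intros k Hk. unfold P, Q.
    assert (Hp : 0 < phi (S (S n)) (S k)) by (apply phi_pos; lia).
    assert (Hid : 2 * phi (S (S n)) (S k) - phi (S (S n)) k - phi (S (S n)) (S (S k)) = 2).
    { unfold phi. rewrite !S_INR. ring. }
    transitivity (f (S k) ^ 2 * (2 * phi (S (S n)) (S k) - phi (S (S n)) k - phi (S (S n)) (S (S k))) / phi (S (S n)) (S k)).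
    { field. lra. }
    rewrite Hid. field. lra. }
  lra.
Qed.
Lemma dpl_ext (f g : R -> R) x l : (forall y, f y = g y) -> derivable_pt_lim f x l -> derivable_pt_lim g x l.
Proof. intros H. replace g with f; auto. apply functional_extensionality; auto. Qed.

Lemma dpl_eq (f : R -> R) x l l' : derivable_pt_lim f x l -> l = l' -> derivable_pt_lim f x l'.
Proof. intros H ->; exact H. Qed.

Lemma deriv_sum (F F' : nat -> R -> R) n t :
  (forall k, (k <= n)%nat -> derivable_pt_lim (F k) t (F' k t)) ->
  derivable_pt_lim (fun s => sum_f_R0 (fun k => F k s) n) t (sum_f_R0 (fun k => F' k t) n).
Proof.
  intros H. induction n.
  - simpl. apply (dpl_ext (F 0%nat)); [reflexivity| apply H; lia].
  - simpl. apply (dpl_ext (plus_fct (fun s => sum_f_R0 (fun k => F k s) n) (F (S n)))).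
    { intros; reflexivity. }
    apply derivable_pt_lim_plus. apply IHn; intros; apply H; lia. apply H; lia.
Qed.

Lemma Rpower_minus1 s b : 0 < s -> Rpower s (b - 1) = Rpower s b * / s.
Proof. intros Hs. unfold Rminus. rewrite Rpower_plus, Rpower_Ropp, Rpower_1; auto. Qed.

Lemma Rpower_pos' s b : 0 < Rpower s b.
Proof. unfold Rpower. apply exp_pos. Qed.

Lemma DI (V V' : R -> R) t0 b p B : 0 < t0 -> b - p + 1 <> 0 ->
  (forall t, t0 <= t -> derivable_pt_lim V t (V' t)) ->
  (forall t, t0 <= t -> V' t <= - (b / t) * V t + B * Rpower t (- p)) ->
  forall t, t0 <= t ->
  Rpower t b * V t - B / (b - p + 1) * Rpower t (b - p + 1)
  <= Rpower t0 b * V t0 - B / (b - p + 1) * Rpower t0 (b - p + 1).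
Proof.
  intros Ht0 Hq Hd Hi t Ht.
  set (q := b - p + 1) in *.
  set (W := fun s => - (Rpower s b * V s - B / q * Rpower s q)).
  assert (W t0 <= W t); [|unfold W in *; lra].
  apply (mono_deriv W (fun s => - (b * Rpower s (b - 1) * V s + Rpower s b * V' s
              - B / q * (q * Rpower s (q - 1))))); auto.
  - intros c Hc.
    apply (dpl_ext (- ((fun s => Rpower s b) * V - mult_real_fct (B / q) (fun s => Rpower s q)))%F).
    { intros; unfold W, opp_fct, minus_fct, mult_fct, mult_real_fct; reflexivity. }
    eapply dpl_eq.
    { apply derivable_pt_lim_opp, derivable_pt_lim_minus.
      + apply derivable_pt_lim_mult. apply (derivable_pt_lim_power c b); lra. apply Hd; lra.
      + apply derivable_pt_lim_scal. apply (derivable_pt_lim_power c q); lra. }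
    reflexivity.
  - intros c Hc. assert (Hc0 : 0 < c) by lra.
    assert (E1 : B / q * (q * Rpower c (q - 1)) = B * Rpower c b * Rpower c (- p)).
    { replace (q - 1) with (b + - p) by (unfold q; ring). rewrite Rpower_plus. field. auto. }
    rewrite E1, Rpower_minus1 by auto.
    pose proof (Hi c ltac:(lra)). pose proof (Rpower_pos' c b).
    assert (Rpower c b * V' c <= Rpower c b * (- (b / c) * V c + B * Rpower c (- p))) by (apply Rmult_le_compat_l; lra).
    assert (Rpower c b * (- (b / c) * V c + B * Rpower c (- p)) = - (b * (Rpower c b * / c) * V c) + B * Rpower c b * Rpower c (- p)) by (field; lra).
    lra.
Qed.

Lemma DI1 (V V' : R -> R) t0 b p B : 0 < t0 -> b < p - 1 -> 0 <= B ->
  (forall t, t0 <= t -> derivable_pt_lim V t (V' t)) ->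
  (forall t, t0 <= t -> V' t <= - (b / t) * V t + B * Rpower t (- p)) ->
  exists A, forall t, t0 <= t -> V t <= A * Rpower t (- b).
Proof.
  intros Ht0 Hb HB Hd Hi.
  exists (Rpower t0 b * V t0 - B / (b - p + 1) * Rpower t0 (b - p + 1)).
  intros t Ht. pose proof (DI V V' t0 b p B Ht0 ltac:(lra) Hd Hi t Ht) as H.
  set (A := Rpower t0 b * V t0 - B / (b - p + 1) * Rpower t0 (b - p + 1)) in *.
  assert (B / (b - p + 1) <= 0).
  { unfold Rdiv. rewrite <- (Rmult_0_r B). apply Rmult_le_compat_l; auto.
    left. apply Rinv_lt_0_compat. lra. }
  pose proof (Rpower_pos' t (b - p + 1)). pose proof (Rpower_pos' t b).
  assert (Rpower t b * V t <= A) by nra.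
  rewrite Rpower_Ropp.
  apply Rmult_le_reg_l with (Rpower t b); auto.
  replace (Rpower t b * (A * / Rpower t b)) with A by (field; lra). lra.
Qed.

Lemma DI2 (V V' : R -> R) t0 b p B : 0 < t0 -> p - 1 < b -> 0 <= B ->
  (forall t, t0 <= t -> derivable_pt_lim V t (V' t)) ->
  (forall t, t0 <= t -> V' t <= - (b / t) * V t + B * Rpower t (- p)) ->
  exists A, forall t, t0 <= t -> V t <= A * Rpower t (1 - p).
Proof.
  intros Ht0 Hb HB Hd Hi.
  set (q := b - p + 1).
  set (A := Rpower t0 b * V t0 - B / q * Rpower t0 q).
  exists (Rmax A 0 * Rpower t0 (- q) + B / q).
  intros t Ht. pose proof (DI V V' t0 b p B Ht0 ltac:(lra) Hd Hi t Ht) as H.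
  fold q A in H.
  pose proof (Rpower_pos' t q). pose proof (Rpower_pos' t b).
  assert (Hq : 0 < q) by (unfold q; lra).
  assert (EV : V t = (Rpower t b * V t) * Rpower t (- b)).
  { rewrite Rpower_Ropp. field. lra. }
  assert (E1 : Rpower t (- b) = Rpower t (1 - p) * Rpower t (- q)).
  { rewrite <- Rpower_plus. f_equal. unfold q. ring. }
  assert (E2 : Rpower t q * Rpower t (- b) = Rpower t (1 - p)).
  { rewrite <- Rpower_plus. f_equal. unfold q. ring. }
  assert (Hle : Rpower t (- q) <= Rpower t0 (- q)).
  { rewrite !Rpower_Ropp. apply Rinv_le_contravar. apply Rpower_pos'.
    apply Rle_Rpower_l; lra. }
  pose proof (Rpower_pos' t (- b)). pose proof (Rpower_pos' t (1 - p)).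
  pose proof (Rpower_pos' t (- q)).
  assert (V t <= (A + B / q * Rpower t q) * Rpower t (- b)).
  { rewrite EV. apply Rmult_le_compat_r; lra. }
  assert (A <= Rmax A 0) by apply Rmax_l. assert (0 <= Rmax A 0) by apply Rmax_r.
  assert (A * Rpower t (- b) <= Rmax A 0 * Rpower t0 (- q) * Rpower t (1 - p)).
  { rewrite E1. apply Rle_trans with (Rmax A 0 * (Rpower t (1 - p) * Rpower t (- q))).
    apply Rmult_le_compat_r; nra.
    replace (Rmax A 0 * Rpower t0 (- q) * Rpower t (1 - p)) with (Rmax A 0 * (Rpower t (1 - p) * Rpower t0 (- q))) by ring.
    apply Rmult_le_compat_l; auto. apply Rmult_le_compat_l; lra. }
  assert ((A + B / q * Rpower t q) * Rpower t (- b) = A * Rpower t (- b) + B / q * Rpower t (1 - p)).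
  { rewrite <- E2. ring. }
  nra.
Qed.

Definition Fk (K : nat) (xi : nat -> R -> R) (j : nat) (t : R) :=
  gam K j * (exp (- (xi (S j) t - xi j t)) - 1).

Lemma gam_0 K : gam K 0 = 0.
Proof. unfold gam. simpl. lra. Qed.

Lemma gam_K K : gam K K = 0.
Proof. unfold gam. rewrite Nat.sub_diag, Nat.mul_0_r. simpl. lra. Qed.

Lemma gam_phi n j : (j <= S (S n))%nat -> gam (S (S n)) j = phi (S (S n)) j / 2.
Proof. intros H. unfold gam, phi. rewrite mult_INR, minus_INR by lia. reflexivity. Qed.

Lemma gam_ge n j : (1 <= j <= S n)%nat -> 1 / 2 <= gam (S (S n)) j.
Proof.
  intros H. unfold gam. assert (1 <= j * (S (S n) - j))%nat by nia.
  apply le_INR in H0. change (INR 1) with 1 in H0. lra.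
Qed.

Lemma rhs_F n xi k t : (1 <= k <= S (S n))%nat ->
  ode_rhs (S (S n)) xi k t = / t * (Fk (S (S n)) xi (k - 1) t - Fk (S (S n)) xi k t).
Proof.
  intros Hk. unfold ode_rhs, Fk.
  destruct (Nat.eqb_spec k 1) as [->|H1].
  - simpl (1 - 1)%nat. rewrite gam_0. ring.
  - destruct (Nat.eqb_spec k (S (S n))) as [->|H2].
    + rewrite gam_K. replace (S (S n) - 1)%nat with (S n) by lia. ring.
    + destruct k as [|k]; [lia|]. replace (S k - 1)%nat with k by lia. ring.
Qed.

Lemma vf_deriv x : derivable_pt_lim vf x (1 - exp (- x)).
Proof. apply is_derive_Reals. unfold vf. auto_derive; [exact I|]. ring. Qed.

Definition Vf (n : nat) (xi : nat -> R -> R) (t : R) := sum_f_R0 (fun k => gam (S (S n)) (S k) * vf (xi (S (S k)) t - xi (S k) t)) n.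
Definition Gf (n : nat) (xi : nat -> R -> R) (t : R) := sum_f_R0 (fun k => gam (S (S n)) (S k) * hf (xi (S (S k)) t - xi (S k) t)) n.
Definition av (n : nat) (xi r : nat -> R -> R) (j : nat) (t : R) := ode_rhs (S (S n)) xi j t + r j t.
Definition Vd (n : nat) (xi r : nat -> R -> R) (t : R) := sum_f_R0 (fun k => - Fk (S (S n)) xi (S k) t * (av n xi r (S (S k)) t - av n xi r (S k) t)) n.

Lemma Vf_deriv n T (xi r : nat -> R -> R) :
  (forall (k : nat) (t : R), (1 <= k <= S (S n))%nat -> T <= t ->
     derivable_pt_lim (xi k) t (ode_rhs (S (S n)) xi k t + r k t)) ->
  forall t, T <= t -> derivable_pt_lim (Vf n xi) t (Vd n xi r t).
Proof.
  intros Hd t Ht. unfold Vf, Vd.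
  apply (deriv_sum (fun k s => gam (S (S n)) (S k) * vf (xi (S (S k)) s - xi (S k) s))
     (fun k s => - Fk (S (S n)) xi (S k) s * (av n xi r (S (S k)) s - av n xi r (S k) s))).
  intros k Hk.
  apply (dpl_ext (mult_real_fct (gam (S (S n)) (S k)) (comp vf (xi (S (S k)) - xi (S k))%F))).
  { intros; reflexivity. }
  eapply dpl_eq.
  { apply derivable_pt_lim_scal. apply derivable_pt_lim_comp.
    apply derivable_pt_lim_minus; apply Hd; auto; lia.
    apply vf_deriv. }
  unfold Fk, av, minus_fct. ring.
Qed.

Lemma sum_opp' (f : nat -> R) n : sum_f_R0 (fun k => - f k) n = - sum_f_R0 f n.
Proof. induction n; simpl; [ring| rewrite IHn; ring]. Qed.

Lemma Vd_eq n (xi r : nat -> R -> R) t : 0 < t ->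
  Vd n xi r t = sum_f_R0 (fun j => - (Fk (S (S n)) xi (S j) t - Fk (S (S n)) xi j t) ^ 2 / t
       + r (S j) t * (Fk (S (S n)) xi (S j) t - Fk (S (S n)) xi j t)) (S n).
Proof.
  intros Ht. unfold Vd.
  pose proof (abel (fun j => av n xi r j t) (fun j => Fk (S (S n)) xi j t) n) as Ha.
  cbv beta in Ha.
  assert (E0 : Fk (S (S n)) xi 0 t = 0) by (unfold Fk; rewrite gam_0; ring).
  assert (EK : Fk (S (S n)) xi (S (S n)) t = 0) by (unfold Fk; rewrite gam_K; ring).
  rewrite E0, EK in Ha.
  rewrite (sum_eq' _ (fun k => - (Fk (S (S n)) xi (S k) t * (av n xi r (S (S k)) t - av n xi r (S k) t)))) by (intros; ring).
  rewrite sum_opp'.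
  assert (sum_f_R0 (fun k => av n xi r (S k) t * (Fk (S (S n)) xi (S k) t - Fk (S (S n)) xi k t)) (S n) =
    sum_f_R0 (fun j => - (Fk (S (S n)) xi (S j) t - Fk (S (S n)) xi j t) ^ 2 / t
       + r (S j) t * (Fk (S (S n)) xi (S j) t - Fk (S (S n)) xi j t)) (S n)).
  { apply sum_eq'. intros j Hj. unfold av. rewrite rhs_F by lia.
    replace (S j - 1)%nat with j by lia. field. lra. }
  rewrite !Rmult_0_r in Ha. lra.
Qed.

Lemma Gf_le n (xi : nat -> R -> R) t :
  Gf n xi t <= sum_f_R0 (fun j => (Fk (S (S n)) xi (S j) t - Fk (S (S n)) xi j t) ^ 2) (S n).
Proof.
  eapply Rle_trans; [|apply (hardy n (fun j => Fk (S (S n)) xi j t))].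
  - right. unfold Gf. apply sum_eq'. intros k Hk. unfold Fk, hf.
    rewrite (gam_phi n (S k)) by lia. assert (0 < phi (S (S n)) (S k)) by (apply phi_pos; lia).
    field. lra.
  - unfold Fk; rewrite gam_0; ring.
  - unfold Fk; rewrite gam_K; ring.
Qed.

Lemma Vd_le n theta T C (xi r : nat -> R -> R) : 0 < T ->
  (forall (k : nat) (t : R), (1 <= k <= S (S n))%nat -> T <= t ->
     Rabs (r k t) <= C * Rpower t (- theta)) ->
  forall t, T <= t ->
  Vd n xi r t <= - (1 / (2 * t)) * Gf n xi t + (INR (S (S n)) * C ^ 2 / 2) * Rpower t (- (2 * theta - 1)).
Proof.
  intros HT Hr t Ht. assert (Ht0 : 0 < t) by lra.
  rewrite Vd_eq by auto.
  set (c := C ^ 2 / 2 * Rpower t (- (2 * theta - 1))).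
  eapply Rle_trans with (sum_f_R0 (fun j => - (1 / (2 * t)) * (Fk (S (S n)) xi (S j) t - Fk (S (S n)) xi j t) ^ 2 + c) (S n)).
  - apply sum_Rle. intros j Hj.
    set (d := Fk (S (S n)) xi (S j) t - Fk (S (S n)) xi j t).
    set (x := r (S j) t).
    assert (Hx : Rabs x <= C * Rpower t (- theta)) by (apply Hr; auto; lia).
    assert (Hx2 : x ^ 2 <= (C * Rpower t (- theta)) ^ 2).
    { assert (0 <= Rabs x) by apply Rabs_pos. rewrite <- (pow2_abs x). nra. }
    assert (Ec : t * (C * Rpower t (- theta)) ^ 2 = 2 * c).
    { unfold c. replace (- (2 * theta - 1)) with (1 + - theta + - theta) by ring.
      rewrite !Rpower_plus, Rpower_1 by auto. field. }
    assert (Hamgm : x * d <= d ^ 2 / (2 * t) + t * x ^ 2 / 2).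
    { assert (0 <= (d - t * x) ^ 2 / (2 * t)).
      { apply Rmult_le_pos. apply pow2_ge_0. left. apply Rinv_0_lt_compat. lra. }
      assert ((d - t * x) ^ 2 / (2 * t) = d ^ 2 / (2 * t) + t * x ^ 2 / 2 - x * d) by (field; lra).
      lra. }
    assert (t * x ^ 2 <= t * (C * Rpower t (- theta)) ^ 2) by (apply Rmult_le_compat_l; lra).
    assert (- d ^ 2 / t = - (1 / (2 * t)) * d ^ 2 - d ^ 2 / (2 * t)) by (field; lra).
    lra.
  - rewrite sum_plus', sum_scal, sum_cte.
    pose proof (Gf_le n xi t).
    assert (0 < 1 / (2 * t)) by (apply Rdiv_lt_0_compat; lra).
    unfold c. 
    assert (- (1 / (2 * t)) * sum_f_R0 (fun j => (Fk (S (S n)) xi (S j) t - Fk (S (S n)) xi j t) ^ 2) (S n)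
      <= - (1 / (2 * t)) * Gf n xi t) by nra.
    lra.
Qed.

Lemma Vf_term n (xi : nat -> R -> R) t k : (k <= n)%nat ->
  gam (S (S n)) (S k) * vf (xi (S (S k)) t - xi (S k) t) <= Vf n xi t.
Proof.
  intros Hk. unfold Vf.
  apply (term_le_sum (fun k => gam (S (S n)) (S k) * vf (xi (S (S k)) t - xi (S k) t))); auto.
  intros j Hj. apply Rmult_le_pos. pose proof (gam_ge n (S j) ltac:(lia)). lra. apply vf_ge0.
Qed.

Lemma Vf_ge0 n xi t : 0 <= Vf n xi t.
Proof.
  unfold Vf. apply sum_nonneg. intros j Hj. apply Rmult_le_pos.
  pose proof (gam_ge n (S j) ltac:(lia)). lra. apply vf_ge0.
Qed.

Lemma Gf_ge0 n xi t : 0 <= Gf n xi t.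
Proof.
  unfold Gf. apply sum_nonneg. intros j Hj. apply Rmult_le_pos.
  pose proof (gam_ge n (S j) ltac:(lia)). lra. unfold hf. apply pow2_ge_0.
Qed.

Lemma PL_sum n (xi : nat -> R -> R) t U : 0 <= U ->
  (forall k, (k <= n)%nat -> xi (S (S k)) t - xi (S k) t <= U) ->
  2 * exp (- (2 * U)) * Vf n xi t <= Gf n xi t.
Proof.
  intros HU Hu. unfold Vf, Gf. rewrite <- sum_scal. apply sum_Rle. intros k Hk.
  pose proof (PL _ U HU (Hu k Hk)). pose proof (gam_ge n (S k) ltac:(lia)).
  match goal with |- ?e * (?g * ?v) <= ?g * ?h => replace (e * (g * v)) with (g * (e * v)) by ring end.
  apply Rmult_le_compat_l; lra.
Qed.

Lemma eventually_small A b eps t0 : 0 < t0 -> 0 < b -> 0 < eps ->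
  exists t1, t0 <= t1 /\ forall t, t1 <= t -> A * Rpower t (- b) <= eps.
Proof.
  intros Ht0 Hb He.
  destruct (Rle_lt_dec A 0) as [HA|HA].
  - exists t0. split; [lra|]. intros t Ht. pose proof (Rpower_pos' t (- b)). nra.
  - set (t1 := Rmax t0 (Rpower (A / eps) (/ b))).
    exists t1. split; [apply Rmax_l|]. intros t Ht.
    assert (Htp : 0 < t) by (unfold t1 in Ht; pose proof (Rmax_l t0 (Rpower (A / eps) (/ b))); lra).
    assert (Hge : A / eps <= Rpower t b).
    { replace (A / eps) with (Rpower (Rpower (A / eps) (/ b)) b).
      2: { rewrite Rpower_mult. replace (/ b * b) with 1 by (field; lra). apply Rpower_1.
           apply Rdiv_lt_0_compat; lra. }
      apply Rle_Rpower_l; [lra|]. split. apply Rpower_pos'.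
      unfold t1 in Ht; pose proof (Rmax_r t0 (Rpower (A / eps) (/ b))). lra. }
    rewrite Rpower_Ropp. pose proof (Rpower_pos' t b).
    apply Rmult_le_reg_r with (Rpower t b); auto.
    replace (A * / Rpower t b * Rpower t b) with A by (field; lra).
    apply Rmult_le_reg_r with (/ eps). apply Rinv_0_lt_compat; auto.
    replace (eps * Rpower t b * / eps) with (Rpower t b) by (field; lra). exact Hge.
Qed.
Theorem mainTheorem14 (K : nat) (theta T C : R) (xi r : nat -> R -> R) :
  (2 <= K)%nat ->
  1 < theta -> theta < 3 / 2 ->
  0 < T ->
  (* the ODE system with remainders r_k, for t in [T, oo) *)
  (forall (k : nat) (t : R), (1 <= k <= K)%nat -> T <= t ->
     derivable_pt_lim (xi k) t (ode_rhs K xi k t + r k t)) ->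
  (* C^1 regularity: the derivative (equivalently r_k) is continuous *)
  (forall (k : nat) (t : R), (1 <= k <= K)%nat -> T <= t ->
     continuity_pt (r k) t) ->
  (forall (k : nat) (t : R), (1 <= k <= K)%nat -> T <= t ->
     Rabs (r k t) <= C * Rpower t (- theta)) ->
  (forall t : R, T <= t -> Rabs (xsum K xi t) <= C * Rpower t (- theta + 1)) ->
  forall k : nat, (1 <= k <= K)%nat ->
    exists (M T0 : R), forall t : R, T0 <= t ->
      Rabs (xi k t) <= M * Rpower t (- theta + 1).
Proof.
  intros HK Hth1 Hth2 HT Hd Hcont Hr Hs k Hk.
  destruct K as [|[|n]]; try lia. clear HK Hcont.
  set (B := INR (S (S n)) * C ^ 2 / 2).
  assert (HB : 0 <= B).
  { unfold B. pose proof (pos_INR (S (S n))). pose proof (pow2_ge_0 C). nra. }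
  pose proof (Vf_deriv n T xi r Hd) as HdV.
  pose proof (Vd_le n theta T C xi r HT Hr) as HVd. fold B in HVd.
  destruct (DI1 (Vf n xi) (Vd n xi r) T 0 (2 * theta - 1) B HT ltac:(lra) HB HdV) as [A0 HA0].
  { intros t Ht. pose proof (HVd t Ht). pose proof (Gf_ge0 n xi t).
    assert (0 < 1 / (2 * t)) by (apply Rdiv_lt_0_compat; lra).
    replace (- (0 / t) * Vf n xi t) with 0 by (field; lra). nra. }
  assert (HA0' : forall t, T <= t -> Vf n xi t <= A0).
  { intros t Ht. pose proof (HA0 t Ht). rewrite Ropp_0, Rpower_O in H by lra. lra. }
  set (U := 1 + 2 * Rmax A0 0).
  assert (HU0 : 0 <= U) by (unfold U; pose proof (Rmax_r A0 0); lra).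
  assert (HU : forall t, T <= t -> forall k, (k <= n)%nat -> xi (S (S k)) t - xi (S k) t <= U).
  { intros t Ht j Hj. pose proof (Vf_term n xi t j Hj). pose proof (HA0' t Ht).
    pose proof (gam_ge n (S j) ltac:(lia)). pose proof (Rmax_l A0 0).
    pose proof (vf_ge_lin (xi (S (S j)) t - xi (S j) t)).
    pose proof (vf_ge0 (xi (S (S j)) t - xi (S j) t)).
    unfold U. nra. }
  set (a1 := exp (- (2 * U))).
  assert (Ha1 : 0 < a1) by apply exp_pos.
  set (b1 := Rmin a1 ((2 * theta - 1 - 1) / 2)).
  assert (Hb1 : 0 < b1) by (unfold b1; apply Rmin_glb_lt; lra).
  assert (Hb1a : b1 <= a1) by apply Rmin_l.
  assert (Hb1p : b1 < 2 * theta - 1 - 1) by (pose proof (Rmin_r a1 ((2 * theta - 1 - 1) / 2)); fold b1 in H; lra).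
  destruct (DI1 (Vf n xi) (Vd n xi r) T b1 (2 * theta - 1) B HT Hb1p HB HdV) as [A1 HA1].
  { intros t Ht. pose proof (HVd t Ht). pose proof (PL_sum n xi t U HU0 (HU t Ht)).
    pose proof (Vf_ge0 n xi t). fold a1 in H0.
    assert (0 < 1 / (2 * t)) by (apply Rdiv_lt_0_compat; lra).
    assert (- (1 / (2 * t)) * Gf n xi t <= - (b1 / t) * Vf n xi t).
    { assert (Eq : - (b1 / t) * Vf n xi t = - (1 / (2 * t)) * (2 * b1 * Vf n xi t)) by (field; lra).
      rewrite Eq. apply Rmult_le_compat_neg_l. lra. nra. }
    lra. }
  set (delta := (3 - 2 * theta) / 4).
  assert (Hdel : 0 < delta < 1 / 4) by (unfold delta; lra).
  destruct (eventually_small A1 b1 (delta ^ 2 / 16) T HT Hb1 ltac:(nra)) as [t1 [Ht1 Hsm]].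
  assert (Hdl : forall t, t1 <= t -> forall k, (k <= n)%nat -> xi (S (S k)) t - xi (S k) t <= delta).
  { intros t Ht j Hj. set (u := xi (S (S j)) t - xi (S j) t).
    destruct (Rle_lt_dec u delta) as [|Hlt]; auto. exfalso.
    pose proof (Vf_term n xi t j Hj). fold u in H.
    pose proof (HA1 t ltac:(lra)). pose proof (Hsm t Ht).
    pose proof (gam_ge n (S j) ltac:(lia)).
    pose proof (vf_mono delta u ltac:(lra)). pose proof (vf_ge_sq delta ltac:(lra)).
    pose proof (vf_ge0 u). nra. }
  set (a2 := exp (- (2 * delta))).
  assert (Ha2 : 2 * theta - 1 - 1 < a2).
  { pose proof (exp_ineq1_le (- (2 * delta))). unfold a2. unfold delta in *. lra. }
  assert (Ht1p : 0 < t1) by lra.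
  destruct (DI2 (Vf n xi) (Vd n xi r) t1 a2 (2 * theta - 1) B Ht1p Ha2 HB
     (fun t Ht => HdV t ltac:(lra))) as [A2 HA2].
  { intros t Ht. pose proof (HVd t ltac:(lra)).
    pose proof (PL_sum n xi t delta ltac:(lra) (Hdl t Ht)).
    pose proof (Vf_ge0 n xi t). fold a2 in H0.
    assert (0 < 1 / (2 * t)) by (apply Rdiv_lt_0_compat; lra).
    assert (- (1 / (2 * t)) * Gf n xi t <= - (a2 / t) * Vf n xi t).
    { assert (Eq : - (a2 / t) * Vf n xi t = - (1 / (2 * t)) * (2 * a2 * Vf n xi t)) by (field; lra).
      rewrite Eq. apply Rmult_le_compat_neg_l. lra. nra. }
    lra. }
  set (M := 8 * Rmax A2 0 + 1).
  assert (HM : 1 <= M) by (unfold M; pose proof (Rmax_r A2 0); lra).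
  assert (Hw : forall t, 0 < t -> Rpower t (1 - (2 * theta - 1)) = Rpower t (- theta + 1) * Rpower t (- theta + 1)).
  { intros t Ht. rewrite <- Rpower_plus. f_equal. ring. }
  assert (Hu2 : forall t, t1 <= t -> forall j, (j <= n)%nat ->
     Rabs (xi (S (S j)) t - xi (S j) t) <= M * Rpower t (- theta + 1)).
  { intros t Ht j Hj. set (u := xi (S (S j)) t - xi (S j) t).
    set (w := Rpower t (- theta + 1)).
    assert (Hw0 : 0 < w) by apply Rpower_pos'.
    pose proof (Vf_term n xi t j Hj). fold u in H.
    pose proof (HA2 t Ht). rewrite Hw in H0 by lra. fold w in H0.
    pose proof (gam_ge n (S j) ltac:(lia)).
    pose proof (vf_ge_sq u ltac:(pose proof (Hdl t Ht j Hj); fold u in H2; lra)).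
    pose proof (vf_ge0 u). pose proof (Rmax_l A2 0). pose proof (Rmax_r A2 0).
    assert (gam (S (S n)) (S j) * (u ^ 2 / 4) <= gam (S (S n)) (S j) * vf u) by (apply Rmult_le_compat_l; lra).
    assert (A2 * (w * w) <= Rmax A2 0 * (w * w)) by (apply Rmult_le_compat_r; nra).
    assert (0 <= u ^ 2) by apply pow2_ge_0.
    assert (u ^ 2 / 8 <= gam (S (S n)) (S j) * (u ^ 2 / 4)) by nra.
    assert (Hu2 : u ^ 2 <= 8 * Rmax A2 0 * (w * w)) by lra.
    assert (M <= M * M) by nra.
    assert (8 * Rmax A2 0 <= M) by (unfold M; lra).
    assert (Hu3 : u ^ 2 <= (M * w) ^ 2).
    { assert (8 * Rmax A2 0 * (w * w) <= M * M * (w * w)) by (apply Rmult_le_compat_r; nra). nra. }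
    rewrite <- (pow2_abs u) in Hu3.
    pose proof (Rabs_pos u).
    destruct (Rle_lt_dec (Rabs u) (M * w)) as [|Hc]; auto.
    exfalso. assert (0 <= M * w) by (apply Rmult_le_pos; lra). assert ((M * w) * (M * w) < Rabs u * Rabs u) by (apply Rmult_le_0_lt_compat; lra). nra. }
  exists (INR (S (S n)) * M + C + INR (S (S n)) * INR (S (S n)) * M), t1.
  intros t Ht. set (w := Rpower t (- theta + 1)).
  assert (Hw0 : 0 < w) by apply Rpower_pos'.
  set (Kr := INR (S (S n))).
  assert (HKr : 2 <= Kr) by (unfold Kr; rewrite !S_INR; pose proof (pos_INR n); lra).
  assert (Hchain : forall j, (j <= S n)%nat -> Rabs (xi (S j) t - xi 1%nat t) <= INR j * M * w).
  { induction j; intros Hj.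
    - simpl. unfold Rminus. rewrite Rplus_opp_r, Rabs_R0. lra.
    - pose proof (IHj ltac:(lia)). pose proof (Hu2 t Ht j ltac:(lia)). fold w in H0.
      replace (xi (S (S j)) t - xi 1%nat t) with ((xi (S (S j)) t - xi (S j) t) + (xi (S j) t - xi 1%nat t)) by ring.
      eapply Rle_trans. apply Rabs_triang. rewrite S_INR. lra. }
  assert (Hchain' : forall j, (j <= S n)%nat -> Rabs (xi (S j) t - xi 1%nat t) <= Kr * M * w).
  { intros j Hj. pose proof (Hchain j Hj). assert (INR j <= Kr) by (unfold Kr; apply le_INR; lia).
    assert (INR j * M * w <= Kr * M * w) by (apply Rmult_le_compat_r; [lra|]; apply Rmult_le_compat_r; lra).
    lra. }
  assert (Hsum : xsum (S (S n)) xi t = sum_f_R0 (fun j => xi (S j) t - xi 1%nat t) (S n) + xi 1%nat t * Kr).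
  { unfold xsum. replace (S (S n) - 1)%nat with (S n) by lia.
    unfold Kr. rewrite <- sum_cte. rewrite <- sum_plus'. apply sum_eq'. intros; ring. }
  assert (HD : Rabs (sum_f_R0 (fun j => xi (S j) t - xi 1%nat t) (S n)) <= Kr * Kr * M * w).
  { eapply Rle_trans. apply sum_f_R0_triangle.
    eapply Rle_trans. apply (sum_Rle _ (fun _ => Kr * M * w)). intros j Hj. apply Hchain'; auto.
    rewrite sum_cte. fold Kr. right. ring. }
  pose proof (Hs t ltac:(lra)). fold w in H. rewrite Hsum in H.
  assert (H1 : Kr * Rabs (xi 1%nat t) <= C * w + Kr * Kr * M * w).
  { replace (Kr * Rabs (xi 1%nat t)) with (Rabs (xi 1%nat t * Kr)) by (rewrite Rabs_mult, (Rabs_right Kr) by lra; ring).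
    replace (xi 1%nat t * Kr) with ((sum_f_R0 (fun j => xi (S j) t - xi 1%nat t) (S n) + xi 1%nat t * Kr) - sum_f_R0 (fun j => xi (S j) t - xi 1%nat t) (S n)) by ring.
    eapply Rle_trans. apply Rabs_triang. rewrite Rabs_Ropp. lra. }
  assert (H2 : Rabs (xi 1%nat t) <= C * w + Kr * Kr * M * w).
  { pose proof (Rabs_pos (xi 1%nat t)). pose proof (Rabs_pos (sum_f_R0 (fun j => xi (S j) t - xi 1%nat t) (S n) + xi 1%nat t * Kr)). nra. }
  destruct k as [|j]; [lia|].
  pose proof (Hchain' j ltac:(lia)).
  replace (xi (S j) t) with ((xi (S j) t - xi 1%nat t) + xi 1%nat t) by ring.
  eapply Rle_trans. apply Rabs_triang. fold Kr. nra.
Qed.
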